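(* Let $n\ge1$, $k\ge 1$, and let $s_1,\dots,s_k$ be positive integers. There are $k$ players who independently each open one cereal box per time step; each box contains one of $n$ coupon types chosen uniformly at random, independently of everything else. Player $i$ is currently missing $s_i$ of the $n$ coupon types, and $X_i(s_i)$ is the number of boxes player $i$ must open until they have all $n$ types. Let $Q_1(s_1,\dots,s_k)$ be the probability that the first player is the fastest to complete the collection, i.e. that $X_1(s_1)=\min\{X_1(s_1),\dots,X_k(s_k)\}$. Then $$Q_1(s_1,\dots,s_k)=1-\sum_{1<i}\frac{s_1}{s_1+s_i}+\sum_{1<i<j}\frac{s_1}{s_1+s_i+s_j}-\sum_{1<i<j<l}\frac{s_1}{s_1+s_i+s_j+s_l}+\cdots+(-1)^{k-1}\frac{s_1}{s_1+\cdots+s_k}+o(1),$$ where the indices $i,j,l,\dots$ range over $\{2,\dots,k\}$.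
   Context: The term $o(1)$ denotes a quantity tending to $0$ as $n\to\infty$ with $k$ and $s_1,\dots,s_k$ fixed. *)

(* Defs.v *)
From mathcomp Require Import all_boot all_order all_algebra.
From mathcomp Require Import all_classical all_reals all_analysis.
Set Implicit Arguments. Unset Strict Implicit. Unset Printing Implicit Defensive.
Import Order.TTheory GRing.Theory Num.Theory numFieldNormedType.Exports.
Local Open Scope ring_scope.

(* A player who initially owns the coupon types in [A] and whose successive
   boxes contain w`_0, w`_1, ... has all n types after m boxes. *)
Definition complete_by (n : nat) (A : {set 'I_n}) (w : seq 'I_n) (m : nat) : bool :=
  (A :|: [set x | x \in take m w]) == [set: 'I_n].

Definition completes_at (n : nat) (A : {set 'I_n}) (w : seq 'I_n) (t : nat) : bool :=
  complete_by A w t && [forall m : 'I_t, ~~ complete_by A w m].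

Definition not_complete_before (n : nat) (A : {set 'I_n}) (w : seq 'I_n) (t : nat) : bool :=
  [forall m : 'I_t, ~~ complete_by A w m].

(* Outcomes of the first t time steps: player i's boxes are the t-tuple om i;
   all outcomes equally likely (uniform, independent coupons). *)
Definition first_wins_at (n k : nat) (p1 : 'I_k) (A : 'I_k -> {set 'I_n}) (t : nat)
    (om : {ffun 'I_k -> t.-tuple 'I_n}) : bool :=
  completes_at (A p1) (om p1) t &&
  [forall j : 'I_k, (j != p1) ==> not_complete_before (A j) (om j) t].

Definition prob_first_wins_at (R : realType) (n k : nat) (p1 : 'I_k)
    (A : 'I_k -> {set 'I_n}) (t : nat) : R :=
  (#|[set om : {ffun 'I_k -> t.-tuple 'I_n} | first_wins_at p1 A om]|)%:R
  / (#|{ffun 'I_k -> t.-tuple 'I_n}|)%:R.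

(* Q_1 = P(X_1 = min_j X_j) = sum_t P(X_1 = t, X_j >= t for all j) *)
Definition Q1 (R : realType) (n k : nat) (p1 : 'I_k) (A : 'I_k -> {set 'I_n}) : R :=
  limn (series ((fun t => prob_first_wins_at R p1 A t) : R^nat)).

Definition incl_excl (R : realType) (k : nat) (p1 : 'I_k) (s : 'I_k -> nat) : R :=
  \sum_(S : {set 'I_k} | p1 \notin S)
     (-1) ^+ #|S| * ((s p1)%:R / ((s p1)%:R + \sum_(i in S) (s i)%:R)).

(* Main.v *)
Require Import Defs.
From mathcomp Require Import all_boot all_order all_algebra.
From mathcomp Require Import all_classical all_reals all_analysis.
From mathcomp Require Import ring lra zify.
From mathcomp Require Import fintype finset.
Set Implicit Arguments. Unset Strict Implicit. Unset Printing Implicit Defensive.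
Import Order.TTheory GRing.Theory Num.Theory numFieldNormedType.Exports.
Local Open Scope ring_scope.

Section Comb.
Variable R : realType.

Lemma sumr_bool (I : finType) (P : pred I) :
  \sum_(i : I) (P i)%:R = (#|P|)%:R :> R.
Proof.
rewrite -sum1_card natr_sum [RHS]big_mkcond; apply: eq_bigr => i _; rewrite -topredE /=; by case: (P i).
Qed.

Lemma sum_tupleS (T : finType) t (F : t.+1.-tuple T -> R) :
  \sum_(w : t.+1.-tuple T) F w = \sum_(x : T) \sum_(w : t.-tuple T) F [tuple of x :: w].
Proof.
rewrite pair_bigA /=.
rewrite (reindex (fun p : T * t.-tuple T => [tuple of p.1 :: p.2])) //=.
exists (fun w : t.+1.-tuple T => (thead w, [tuple of behead w])).
  by move=> [x w] _ /=; congr (_, _); apply: val_inj.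
by move=> w _; case/tupleP: w => x w; apply: val_inj.
Qed.

Lemma sum_tuple1 (T : finType) t :
  \sum_(w : t.-tuple T) (1 : R) = (#|T| ^ t)%:R.
Proof. by rewrite sumr_const card_tuple. Qed.

Lemma avoid_cnt n (T : {set 'I_n}) t m : (m <= t)%N ->
  \sum_(w : t.-tuple 'I_n) (all (fun x => x \notin T) (take m w))%:R
   = (((n - #|T|) ^ m) * n ^ (t - m))%:R :> R.
Proof.
elim: t m => [|t IH] [|m] //= Hm.
- by rewrite (eq_bigr (fun _ => 1)) ?sum_tuple1 ?card_ord // => w _; rewrite take0.
- rewrite (eq_bigr (fun _ => 1)) ?sum_tuple1 ?card_ord ?expn0 ?mul1n ?subn0 //.
  by move=> w _; rewrite take0.
- rewrite sum_tupleS.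
  rewrite (eq_bigr (fun x : 'I_n => (x \notin T)%:R *
        \sum_(w : t.-tuple 'I_n) (all (fun x => x \notin T) (take m w))%:R)); last first.
    move=> x _; rewrite mulr_sumr; apply: eq_bigr => w _ /=.
    by case: (x \in T); rewrite /= ?mul0r ?mul1r.
  rewrite -mulr_suml IH // sumr_bool -natrM; congr (_ %:R).
  rewrite subSS expnS -mulnA; congr (_ * _)%N.
  transitivity #|~: T|; first by apply: eq_card => x; rewrite !inE.
  by rewrite cardsCs finset.setCK card_ord.
Qed.

End Comb.
Section Comb2.
Variable R : realType.

Lemma sum_subsets_card (I : finType) (M : {set I}) N (phi : nat -> R) :
  (#|M| <= N)%N ->
  \sum_(T : {set I} | T \subset M) phi #|T| = \sum_(j < N.+1) ('C(#|M|, j))%:R * phi j.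
Proof.
move=> HN.
rewrite (partition_big (fun T : {set I} => (inord #|T| : 'I_N.+1)) xpredT) //=.
apply: eq_bigr => j _.
rewrite -cards_draws -sumr_const.
rewrite mulr_suml.
apply: eq_big => [T|T /andP[TM /eqP <-]]; last first.
  by rewrite mul1r inordK // ltnS (leq_trans (subset_leq_card TM)).
rewrite !inE; case TM: (T \subset M) => //=.
have hT : (#|T| < N.+1)%N by rewrite ltnS (leq_trans (subset_leq_card TM)).
by apply/eqP/eqP => [<-|/eqP Hj]; [rewrite inordK | apply/val_inj; rewrite /= inordK // (eqP Hj)].
Qed.

Lemma alt_binom b : \sum_(j < b.+1) ('C(b, j))%:R * (-1) ^+ j = (b == 0%N)%:R :> R.
Proof.
have := exprDn (1 : R) (-1) b; rewrite subrr expr0n => ->.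
by apply: eq_bigr => j _; rewrite expr1n mul1r mulr_natl.
Qed.

Lemma alt_subsets (I : finType) (B : {set I}) :
  \sum_(T : {set I} | T \subset B) (-1) ^+ #|T| = (B == set0)%:R :> R.
Proof.
by rewrite (sum_subsets_card (fun j => (-1) ^+ j) (leqnn #|B|)) alt_binom cards_eq0.
Qed.

Lemma cb_incl_excl n (A : {set 'I_n}) (w : seq 'I_n) m :
  (complete_by A w m)%:R = \sum_(T : {set 'I_n} | T \subset ~: A)
      (-1) ^+ #|T| * (all (fun x => x \notin T) (take m w))%:R :> R.
Proof.
set S := [set x | x \in take m w].
have allE (T : {set 'I_n}) : all (fun x => x \notin T) (take m w) = (T \subset ~: S).
  apply/idP/idP => H.
    apply/subsetP => x xT; rewrite !inE; apply: contraT; rewrite negbK => xw.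
    by move/allP: H => /(_ x xw) /=; rewrite xT.
  apply/allP => x xw /=; apply: contraT; rewrite negbK => xT.
  by have := subsetP H x xT; rewrite !inE xw.
transitivity (\sum_(T : {set 'I_n} | T \subset ~: A :&: ~: S) (-1) ^+ #|T| : R); last first.
  rewrite big_mkcond [RHS]big_mkcond; apply: eq_bigr => T _; rewrite subsetI allE.
  by case: (T \subset ~: A); case: (T \subset ~: S); rewrite /= ?mulr1 ?mulr0.
rewrite alt_subsets -finset.setCU /complete_by -/S.
suff -> : (~: (A :|: S) == set0) = (A :|: S == [set: 'I_n]) by [].
by apply/eqP/eqP => [H|->]; [rewrite -[_ :|: _]finset.setCK H finset.setC0 | rewrite finset.setCT].
Qed.

End Comb2.

Section Player.
Variable R : realType.

Definition Fq (n s N m : nat) : R :=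
  \sum_(j < N.+1) ('C(s, j))%:R * (-1) ^+ j * (1 - j%:R / n%:R) ^+ m.

Lemma cb_cnt n (A : {set 'I_n}) N t m : (0 < n)%N -> (#|~: A| <= N)%N -> (m <= t)%N ->
  \sum_(w : t.-tuple 'I_n) (complete_by A w m)%:R = (n%:R) ^+ t * Fq n #|~: A| N m :> R.
Proof.
move=> n0 HN Hm.
under eq_bigr do rewrite cb_incl_excl.
rewrite exchange_big /=.
under eq_bigr do rewrite -mulr_sumr avoid_cnt //.
rewrite (sum_subsets_card (fun j => (-1) ^+ j * (((n - j) ^ m) * n ^ (t - m))%:R) HN).
rewrite /Fq mulr_sumr; apply: eq_bigr => j _.
have [js|js] := leqP j #|~: A%SET|; last by rewrite bin_small // !mul0r mulr0.
have jn : (j <= n)%N.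
  by apply: (leq_trans js); rewrite -[X in (_ <= X)%N](card_ord n) max_card.
have n0' : (n%:R : R) != 0 by rewrite pnatr_eq0 -lt0n.
rewrite natrM natrX natrB // natrX.
have -> : ((n%:R - j%:R) ^+ m = n%:R ^+ m * (1 - j%:R / n%:R) ^+ m :> R).
  by rewrite -exprMn mulrBr mulr1 mulrCA divff // mulr1.
have -> : (n%:R ^+ t = n%:R ^+ m * n%:R ^+ (t - m) :> R) by rewrite -exprD subnKC.
ring.
Qed.


Lemma cb_mono n (A : {set 'I_n}) w m m' : (m <= m')%N -> complete_by A w m -> complete_by A w m'.
Proof.
move=> Hm /eqP H; apply/eqP/setP => x; rewrite inE.
have : x \in A :|: [set x | x \in take m w] by rewrite H inE.
rewrite !inE => /orP [->//|xw]; apply/orP; right.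
by move: xw; rewrite -(take_takel w Hm) => /mem_take.
Qed.

Lemma ncb_S n (A : {set 'I_n}) w t :
  not_complete_before A w t.+1 = ~~ complete_by A w t.
Proof.
apply/forallP/idP => [/(_ ord_max) //|H m].
apply: contra H; apply: cb_mono; rewrite -ltnS; exact: ltn_ord.
Qed.

Lemma ca_S n (A : {set 'I_n}) w t :
  completes_at A w t.+1 = complete_by A w t.+1 && ~~ complete_by A w t.
Proof. by rewrite /completes_at -ncb_S. Qed.

Definition beta (s j : nat) : R := if j == 0%N then 0 else ('C(s, j))%:R * (-1) ^+ j.+1.

Lemma h_formula n (A : {set 'I_n}) N t : (0 < n)%N -> (#|~: A| <= N)%N ->
  \sum_(w : t.+1.-tuple 'I_n) (not_complete_before A w t.+1)%:R / (n%:R ^+ t.+1)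
  = \sum_(j < N.+1) beta #|~: A| j * (1 - j%:R / n%:R) ^+ t.
Proof.
move=> n0 HN.
have n0' : (n%:R : R) != 0 by rewrite pnatr_eq0 -lt0n.
rewrite -mulr_suml.
have E (w : seq 'I_n) : (not_complete_before A w t.+1)%:R = 1 - (complete_by A w t)%:R :> R.
  by rewrite ncb_S; case: (complete_by _ _ _); rewrite ?subrr ?subr0.
under eq_bigr do rewrite E.
rewrite sumrB sum_tuple1 card_ord natrX (cb_cnt (N:=N)) //.
rewrite mulrBl divff ?expf_neq0 // mulrAC divff ?expf_neq0 // mul1r.
rewrite /Fq big_ord_recl [RHS]big_ord_recl /= /beta /=.
rewrite bin0 expr0 !mul0r subr0 expr1n !mulr1 add0r.
rewrite opprD addrA subrr add0r -sumrN; apply: eq_bigr => j _.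
by rewrite exprS; ring.
Qed.

Lemma g_formula n (A : {set 'I_n}) N t : (0 < n)%N -> (#|~: A| <= N)%N ->
  \sum_(w : t.+1.-tuple 'I_n) (completes_at A w t.+1)%:R / (n%:R ^+ t.+1)
  = \sum_(j < N.+1) beta #|~: A| j * (j%:R / n%:R) * (1 - j%:R / n%:R) ^+ t.
Proof.
move=> n0 HN.
have n0' : (n%:R : R) != 0 by rewrite pnatr_eq0 -lt0n.
rewrite -mulr_suml.
have E (w : seq 'I_n) : (completes_at A w t.+1)%:R =
     (complete_by A w t.+1)%:R - (complete_by A w t)%:R :> R.
  rewrite ca_S; move: (@cb_mono n A w t t.+1 (leqnSn t)).
  case: (complete_by A w t.+1); case: (complete_by A w t) => /= H; try by rewrite ?subrr ?subr0.
  by have := H isT.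
under eq_bigr do rewrite E.
rewrite sumrB !(cb_cnt (N:=N)) // ?leqnSn //.
rewrite -mulrBr mulrAC divff ?expf_neq0 // mul1r.
rewrite /Fq -sumrB; apply: eq_bigr => j _.
rewrite /beta; case: eqP => [->|_]; first by rewrite !mul0r subr0 !expr1n subrr.
by rewrite !exprS; ring.
Qed.

End Player.

Section Ana.
Variable R : realType.

Lemma series_geom_lim (I : finType) (c r : I -> R) (p : R^nat) :
  p 0%N = 0 -> (forall t, p t.+1 = \sum_i c i * r i ^+ t) ->
  (forall i, c i != 0 -> `|r i| < 1) ->
  limn (series p) = \sum_i c i / (1 - r i).
Proof.
move=> p0 pS hr.
have E : [sequence series p n.+1]_n = (fun m => \sum_i series (geometric (c i) (r i)) m).
  apply/funext => m /=; rewrite !seriesEord /= big_ord_recl p0 add0r.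
  rewrite (eq_bigr (fun j : 'I_m => \sum_i c i * r i ^+ j)); last by move=> j _; exact: pS.
  by rewrite exchange_big /=; apply: eq_bigr => i _; rewrite seriesEord.
have H : ((fun m => \sum_i series (geometric (c i) (r i)) m) @ \oo --> \sum_i c i / (1 - r i))%classic.
  apply: (cvg_big (@pseudometric_normed_Zmodule.add_continuous R R^o)) => // i _.
  have [->|ci] := eqVneq (c i) 0.
    rewrite mul0r; apply: cvg_near_cst; near=> m.
    by rewrite seriesEord /=; apply: big1 => j _; rewrite mul0r.
  by apply: cvg_geometric_series; exact: hr.
apply: cvg_lim => //.
by rewrite -cvg_shiftS E.
Unshelve. all: end_near.
Qed.

End Ana.
Section Est.
Variable R : realType.

Lemma prod_bounds (I : finType) (x : I -> R) : (forall i, 0 <= x i <= 1) ->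
  [/\ 0 <= \prod_i (1 - x i), \prod_i (1 - x i) <= 1,
      1 - \sum_i x i <= \prod_i (1 - x i) &
      \prod_i (1 - x i) <= 1 - \sum_i x i + (\sum_i x i) ^+ 2].
Proof.
move=> hx.
pose K (p s : R) := [/\ 0 <= s, 0 <= p, p <= 1, 1 - s <= p & p <= 1 - s + s ^+ 2].
suff [] : K (\prod_i (1 - x i)) (\sum_i x i) by [].
apply: (big_rec2 K); first by rewrite /K expr0n /= addr0 subr0 lexx ler01.
move=> i p s _ [s0 p0 p1 ps1 ps2]; have /andP[x0 x1] := hx i.
split.
- by rewrite addr_ge0.
- by rewrite mulr_ge0 // subr_ge0.
- by rewrite mulr_ile1 // ?subr_ge0 // lerBlDr lerDl.
- nra.
- nra.
Qed.

Lemma term_est (u y d : R) : 0 <= u -> u <= y -> 0 < y -> y <= 2^-1 ->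
  y - y ^+ 2 <= d -> d <= y -> `|u / d - u / y| <= 2 * y.
Proof.
move=> u0 uy y0 y2 d1 d2.
have yy : 0 < y - y ^+ 2 by rewrite expr2; nra.
have d0 : 0 < d by apply: lt_le_trans d1.
have -> : u / d - u / y = (u * (y - d)) / (d * y) by field; rewrite ?lt0r_neq0.
have dy : 0 < d * y by rewrite mulr_gt0.
have num0 : 0 <= u * (y - d) by apply: mulr_ge0; lra.
rewrite ger0_norm; last by apply: divr_ge0 => //; exact: ltW.
rewrite ler_pdivrMr //.
have h1 : u * (y - d) <= y * (y ^+ 2) by apply: ler_pM; lra.
have h2 : y * y ^+ 2 <= 2 * y * (y - y ^+ 2) * y.
  have : 0 <= y ^+ 3 * (1 - 2 * y) by apply: mulr_ge0; [apply: exprn_ge0; exact: ltW | lra].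
  by rewrite !exprS expr0; nra.
apply: (le_trans h1); apply: (le_trans h2).
have hp : 0 <= 2 * y * y by apply: mulr_ge0; lra.
have := ler_wpM2l hp d1; nra.
Qed.

End Est.
Section PolyI.
Variable R : realType.

Definition Ip (p : {poly R}) : R := \sum_(i < size p) p`_i / i.+1%:R.

Lemma IpE (p : {poly R}) N : (size p <= N)%N -> Ip p = \sum_(i < N) p`_i / i.+1%:R.
Proof.
move=> H; rewrite /Ip (big_ord_widen N (fun i => p`_i / i.+1%:R) H) big_mkcond.
by apply: eq_bigr => i _; case: ltnP => // hi; rewrite nth_default // mul0r.
Qed.

Lemma Ip0 : Ip 0 = 0.
Proof. by rewrite /Ip size_poly0 big_ord0. Qed.

Lemma IpD (p q : {poly R}) : Ip (p + q) = Ip p + Ip q.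
Proof.
rewrite (@IpE _ (maxn (size p) (size q))) ?size_polyD //.
rewrite (@IpE p (maxn (size p) (size q))) ?leq_maxl //.
rewrite (@IpE q (maxn (size p) (size q))) ?leq_maxr //.
by rewrite -big_split; apply: eq_bigr => i _; rewrite coefD mulrDl.
Qed.

Lemma IpZ c (p : {poly R}) : Ip (c *: p) = c * Ip p.
Proof.
rewrite (@IpE _ (size p)) ?size_scale_leq // /Ip mulr_sumr.
by apply: eq_bigr => i _; rewrite coefZ mulrA.
Qed.

Lemma Ip_sum (I : finType) (P : pred I) (F : I -> {poly R}) :
  Ip (\sum_(i | P i) F i) = \sum_(i | P i) Ip (F i).
Proof. exact: (big_morph Ip IpD Ip0). Qed.

Lemma IpXn m : Ip 'X^m = m.+1%:R^-1.
Proof.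
rewrite /Ip size_polyXn big_ord_recr /= big1 ?add0r; first by rewrite coefXn eqxx mul1r.
by move=> i _; rewrite coefXn /= (ltn_eqF (ltn_ord i)) mul0r.
Qed.

Lemma pow1mX i : (1 - 'X) ^+ i = \sum_(c < i.+1) (('C(i, c))%:R * (-1) ^+ c) *: ('X^c : {poly R}).
Proof.
rewrite exprDn; apply: eq_bigr => c _.
rewrite expr1n mul1r -mulr_natl -mul_polyC [(- 'X) ^+ c]exprNn polyCM rmorphXn rmorphN rmorph1 rmorph_nat mulrA.
by [].
Qed.

Lemma Ip_1mX i : Ip ((1 - 'X) ^+ i) = i.+1%:R^-1.
Proof.
rewrite pow1mX Ip_sum.
under eq_bigr do rewrite IpZ IpXn.
have ip : (i.+1%:R : R) != 0 by rewrite pnatr_eq0.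
have E c : ('C(i, c))%:R / (c.+1)%:R = ('C(i.+1, c.+1))%:R / (i.+1)%:R :> R.
  apply/eqP; rewrite eqr_div ?pnatr_eq0 // -!natrM; apply/eqP; congr (_%:R).
  by rewrite mulnC (mul_bin_diag i.+1 c) mulnC.
have A := alt_binom R i.+1.
rewrite big_ord_recl /= bin0 expr0 mulr1 in A.
transitivity (\sum_(c < i.+1) - ('C(i.+1, bump 0 c)%:R * (-1) ^+ bump 0 c) / i.+1%:R : R).
  apply: eq_bigr => c _; rewrite -mulrA mulrCA E /bump /= add1n exprS; ring.
rewrite -mulr_suml sumrN.
have -> : \sum_(c < i.+1) 'C(i.+1, bump 0 c)%:R * (-1) ^+ bump 0 c = -1 :> R.
  by apply/eqP; rewrite -subr_eq0 opprK addrC A.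
by rewrite opprK mul1r.
Qed.

Lemma Ip_comp (p : {poly R}) : Ip (p \Po (1 - 'X)) = Ip p.
Proof.
rewrite comp_polyE Ip_sum [RHS]/Ip; apply: eq_bigr => i _.
by rewrite IpZ Ip_1mX.
Qed.

End PolyI.
Section Expand.
Variable (V : comNzRingType).

Lemma prod1D (I : finType) (P : pred I) (a : I -> V) :
  \prod_(i | P i) (1 + a i) = \sum_(S : {set I} | S \subset [set i | P i]) \prod_(i in S) a i.
Proof.
pose c i := if P i then a i else 0.
have -> : \prod_(i | P i) (1 + a i) = \prod_i \sum_(b : bool) (if b then c i else 1).
  rewrite [RHS](bigID P) /= [X in _ * X]big1 ?mulr1; last first.
    by move=> i /negbTE Pi; rewrite big_bool /= /c Pi add0r.
  by apply: eq_bigr => i Pi; rewrite big_bool /= /c Pi addrC.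
rewrite bigA_distr_bigA /=.
rewrite (reindex (fun S : {set I} => [ffun i => i \in S])) /=; last first.
  exists (fun f : {ffun I -> bool} => [set i | f i]) => [S _|f _].
    by apply/setP => i; rewrite inE ffunE.
  by apply/ffunP => i; rewrite !ffunE inE.
rewrite [RHS]big_mkcond; apply: eq_bigr => S _.
under eq_bigr do rewrite ffunE.
rewrite -big_mkcond /=.
case: ifP => [/subsetP HS|/negbT /subsetPn [i iS]].
  by apply: eq_bigr => i iS; rewrite /c; have := HS i iS; rewrite inE => ->.
by rewrite inE => nPi; rewrite (bigD1 i) //= /c (negbTE nPi) mul0r.
Qed.

End Expand.
Lemma sum_ext (V : zmodType) m N (f : nat -> V) : (m <= N)%N ->
  (forall j, (m < j)%N -> f j = 0) -> \sum_(j < N.+1) f j = \sum_(j < m.+1) f j.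
Proof.
move=> mN hf; rewrite [RHS](big_ord_widen N.+1 f) ?ltnS // [RHS]big_mkcond.
by apply: eq_bigr => j _; case: ltnP => //= hj; rewrite hf.
Qed.

Section Ident.
Variable R : realType.

Lemma sum_beta_X s N : (s <= N)%N ->
  \sum_(j < N.+1) beta R s j *: ('X^j : {poly R}) = 1 - (1 - 'X) ^+ s.
Proof.
move=> sN.
rewrite pow1mX -(@sum_ext _ s N (fun c => ('C(s, c)%:R * (-1) ^+ c) *: ('X^c : {poly R}))) //; last first.
  by move=> j hj; rewrite bin_small // mul0r scale0r.
rewrite !big_ord_recl /= /beta /= scale0r add0r bin0 expr0 mulr1 scale1r.
rewrite opprD addrA subrr add0r -sumrN; apply: eq_bigr => j _.
by rewrite -scaleNr exprS mulN1r mulrN.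
Qed.

Lemma sum_beta_dX s N : (s <= N)%N ->
  \sum_(j < N.+1) beta R s j *: ((j%:R : R) *: ('X^(j.-1) : {poly R})) = (s%:R : R) *: (1 - 'X) ^+ (s.-1).
Proof.
move=> sN.
transitivity ((\sum_(j < N.+1) beta R s j *: ('X^j : {poly R}))^`()).
  rewrite (big_morph (@deriv R) (@derivD R) (@deriv0 R)); apply: eq_bigr => j _.
  by rewrite derivZ derivXn scaler_nat.
rewrite (sum_beta_X sN) derivB derivC (deriv_exp (1 - 'X)) derivB derivC derivX.
by rewrite !sub0r mulN1r mulNrn opprK scaler_nat.
Qed.


Lemma signP m : ((-1) ^+ m : {poly R}) = ((-1) ^+ m : R)%:P.
Proof. by rewrite polyC_exp polyCN polyC1. Qed.

Variables (k : nat) (p1 : 'I_k) (s : 'I_k -> nat) (N : nat).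
Hypotheses (hs1 : (0 < s p1)%N) (hsN : forall i, (s i <= N)%N).

Definition eJ (J : {ffun 'I_k -> 'I_N.+1}) : R := \prod_i beta R (s i) (J i).
Definition Lval : R := \sum_(J : {ffun 'I_k -> 'I_N.+1}) eJ J * (J p1)%:R / (\sum_i (J i : nat))%:R.

Definition Gpol (i : 'I_k) (j : 'I_N.+1) : {poly R} :=
  beta R (s i) j *: (if i == p1 then (j%:R : R) *: 'X^(j.-1) else 'X^j).
Definition Qp : {poly R} :=
  \prod_i (if i == p1 then ((s p1)%:R : R) *: 'X^((s p1).-1) else 1 - 'X^(s i)).

Lemma IpPL : Ip (\prod_i \sum_(j < N.+1) Gpol i j) = Lval.
Proof.
rewrite bigA_distr_bigA Ip_sum; apply: eq_bigr => J _.
rewrite /Gpol scaler_prod -/(eJ J) IpZ.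
rewrite (bigD1 p1) //= eqxx.
rewrite (eq_bigr (fun i => 'X^(J i))); last by move=> i; rewrite ?andTb => /negbTE ->.
rewrite prodrXr -scalerAl -exprD IpZ IpXn.
have [J0|Jpos] := posnP (J p1).
  suff -> : eJ J = 0 by rewrite !mul0r.
  by rewrite /eJ (bigD1 p1) //= J0 /beta /= mul0r.
by rewrite [in RHS](bigD1 p1) //= -addSn prednK // mulrA.
Qed.

Lemma PL_comp : \prod_i \sum_(j < N.+1) Gpol i j = Qp \Po (1 - 'X).
Proof.
rewrite /Qp rmorph_prod; apply: eq_bigr => i _.
rewrite /Gpol; case: eqP => [->|_].
  apply: eq_trans (sum_beta_dX (hsN p1)) _.
  rewrite -[RHS]/((((s p1)%:R : R) *: ('X^((s p1).-1) : {poly R})) \Po (1 - 'X)).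
  by rewrite comp_polyZ rmorphXn /= comp_polyX.
apply: eq_trans (sum_beta_X (hsN i)) _.
rewrite -[RHS]/((1 - ('X^(s i) : {poly R})) \Po (1 - 'X)).
by rewrite rmorphB rmorph1 rmorphXn /= comp_polyX.
Qed.

Lemma IpQ : Ip Qp = incl_excl R p1 s.
Proof.
rewrite /Qp (bigD1 p1) //= eqxx.
rewrite (eq_bigr (fun i => 1 + (- 'X^(s i)))); last by move=> i /negbTE ->.
rewrite prod1D mulr_sumr Ip_sum /incl_excl.
rewrite (eq_bigl (fun S : {set 'I_k} => p1 \notin S)); last first.
  move=> S; apply/subsetP/idP => [H|H i iS].
    by apply/negP => /H; rewrite inE eqxx.
  by rewrite inE; apply: contraNneq H => <-.
apply: eq_bigr => S _.
rewrite prodrN prodrXr signP mul_polyC -scalerAl -scalerAr -exprD !IpZ IpXn.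
rewrite -addSn prednK // natrD natr_sum.
by rewrite mulrCA.
Qed.

Lemma Lval_eq : Lval = incl_excl R p1 s.
Proof. by rewrite -IpPL PL_comp Ip_comp IpQ. Qed.

End Ident.

Section Game.
Variable R : realType.
Variables (n k : nat) (p1 : 'I_k) (A : 'I_k -> {set 'I_n}).

Lemma pfw0 : A p1 != [set: 'I_n] -> prob_first_wins_at R p1 A 0 = 0.
Proof.
move=> HA; rewrite /prob_first_wins_at.
suff -> : #|[set om : {ffun 'I_k -> 0.-tuple 'I_n} | first_wins_at p1 A om]| = 0%N by rewrite mul0r.
apply: eq_card0 => om; rewrite inE /first_wins_at /completes_at /complete_by take0.
suff -> : [set x | x \in [::]] = set0 :> {set 'I_n} by rewrite setU0 (negbTE HA).
by apply/setP => x; rewrite !inE.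
Qed.

Definition Dt (N t : nat) (i : 'I_k) (j : 'I_N.+1) : R :=
  beta R #|~: A i| j * (if i == p1 then j%:R / n%:R else 1) * (1 - j%:R / n%:R) ^+ t.

Lemma pfwS N t : (0 < n)%N -> (forall i, #|~: A i| <= N)%N ->
  prob_first_wins_at R p1 A t.+1 = \prod_(i : 'I_k) \sum_(j < N.+1) @Dt N t i j.
Proof.
move=> n0 HN; rewrite /prob_first_wins_at.
pose Fam (i : 'I_k) : pred (t.+1.-tuple 'I_n) := fun w =>
  if i == p1 then completes_at (A i) w t.+1 else not_complete_before (A i) w t.+1.
have -> : #|[set om : {ffun 'I_k -> t.+1.-tuple 'I_n} | first_wins_at p1 A om]| =
          #|(family Fam : simpl_pred {ffun 'I_k -> t.+1.-tuple 'I_n})|.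
  apply: eq_card => om; rewrite inE; apply/andP/familyP => [[H1 /forallP H2] i|H].
    rewrite /Fam unfold_in /=; case: eqP => [->//|/eqP ne].
    by move/implyP: (H2 i); apply.
  split; first by have := H p1; rewrite /Fam unfold_in /= eqxx.
  apply/forallP => i; apply/implyP => ne; have := H i; by rewrite /Fam unfold_in /= (negbTE ne).
rewrite card_family foldrE big_map big_enum /=.
rewrite card_ffun card_tuple !card_ord natr_prod.
rewrite natrX natrX -[X in _ ^+ X](card_ord k) -prodr_const -prodf_div.
apply: eq_bigr => i _.
rewrite -sumr_bool mulr_suml /Fam /Dt; case: eqP => [->|_].
  by rewrite (@g_formula R n (A p1) N t) //; apply: eq_bigr => j _; rewrite eqxx.
by rewrite (@h_formula R n (A i) N t) //; apply: eq_bigr => j _; rewrite mulr1.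
Qed.



Definition rJ N (J : {ffun 'I_k -> 'I_N.+1}) : R := \prod_i (1 - (J i)%:R / n%:R).

Lemma pfw_geom N t : (0 < n)%N -> (forall i, #|~: A i| <= N)%N ->
  prob_first_wins_at R p1 A t.+1 =
  \sum_(J : {ffun 'I_k -> 'I_N.+1})
     (@eJ R k (fun i => #|~: A i|) N J * (J p1)%:R / n%:R) * (rJ J) ^+ t.
Proof.
move=> n0 HN; rewrite (pfwS t n0 HN) bigA_distr_bigA; apply: eq_bigr => J _.
rewrite /Dt !big_split /= prodrXl /eJ /rJ -!mulrA; congr (_ * _).
rewrite (bigD1 p1) //= eqxx big1 ?mulr1; first by rewrite !mulrA.
by move=> i /negbTE ->.
Qed.

End Game.

Lemma half_bound (R : realType) (SJ K2 n : nat) : (0 < n)%N -> (2 * K2 <= n)%N ->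
  (SJ <= K2)%N -> (SJ%:R / n%:R : R) <= 2^-1.
Proof.
move=> n0 hK2 hSK.
have nR : (0 : R) < n%:R by rewrite ltr0n.
have yK : (SJ%:R / n%:R : R) <= K2%:R / n%:R by rewrite ler_pM2r ?invr_gt0 // ler_nat.
apply: le_trans yK _.
rewrite ler_pdivrMr // -[X in _ <= X * _]div1r mulrC mulrA ler_pdivlMr ?ltr0n // mulr1.
by rewrite mulrC -natrM ler_nat.
Qed.

Lemma term_bound (R : realType) (J1 SJ n K2 : nat) (r : R) : (0 < n)%N -> (2 * K2 <= n)%N ->
  (SJ <= K2)%N -> (J1 <= SJ)%N -> (0 < J1)%N ->
  1 - SJ%:R / n%:R <= r -> r <= 1 - SJ%:R / n%:R + (SJ%:R / n%:R) ^+ 2 ->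
  `|(J1%:R / n%:R) / (1 - r) - J1%:R / SJ%:R| <= 2 * (K2%:R / n%:R).
Proof.
move=> n0 hK2 hSK hJS hJ0 r1 r2.
have nR : (0 : R) < n%:R by rewrite ltr0n.
have SJ0 : (0 < SJ)%N by apply: leq_trans hJS.
have SR : (0 : R) < SJ%:R by rewrite ltr0n.
have -> : (J1%:R / SJ%:R : R) = (J1%:R / n%:R) / (SJ%:R / n%:R).
  by field; rewrite !lt0r_neq0.
have yK : (SJ%:R / n%:R : R) <= K2%:R / n%:R by rewrite ler_pM2r ?invr_gt0 // ler_nat.
have K2n : (K2%:R / n%:R : R) <= 2^-1.
  rewrite ler_pdivrMr // -[X in _ <= X * _]div1r mulrC mulrA ler_pdivlMr ?ltr0n // mulr1.
  by rewrite mulrC -natrM ler_nat.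
apply: le_trans (term_est _ _ _ _ _ _) _.
- by rewrite divr_ge0 ?ler0n.
- by rewrite ler_pM2r ?invr_gt0 // ler_nat.
- by rewrite divr_gt0.
- exact: le_trans yK K2n.
- lra.
- lra.
- by rewrite ler_pM2l // ltr0n.
Qed.

Unset Implicit Arguments.
Unset Strict Implicit.

Theorem mainTheorem5 (R : realType) (k : nat) (hk : (0 < k)%N) (s : 'I_k -> nat)
  (hs : forall i, (0 < s i)%N) :
  forall eps : R, 0 < eps ->
  exists N : nat, forall n : nat, (N <= n)%N ->
  forall A : 'I_k -> {set 'I_n}, (forall i, #|~: A i| = s i) ->
  `| Q1 R (Ordinal hk) A - incl_excl R (Ordinal hk) s | < eps.
Proof.
move=> eps eps0.
set p1 := Ordinal hk.
set K := (\sum_i s i)%N.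
have hsK i : (s i <= K)%N by rewrite /K (bigD1 i) //= leq_addr.
set K2 := (K * k)%N.
have KK2 : (K <= K2)%N by rewrite /K2 leq_pmulr.
set C := \sum_(J : {ffun 'I_k -> 'I_K.+1}) `|eJ R s J|.
have C0 : 0 <= C by apply: sumr_ge0 => J _.
set M := Num.Def.truncn (C * (2 * K2%:R) / eps).
exists (M + 2 * K2).+1 => n hn A hA.
have n0 : (0 < n)%N by apply: leq_trans hn.
have hK2n : (2 * K2 <= n)%N by move: hn; lia.
have hAK i : (#|~: A i| <= K)%N by rewrite hA.
have nR : (0 : R) < n%:R by rewrite ltr0n.
have eJE (J : {ffun 'I_k -> 'I_K.+1}) : eJ R (fun i => #|~: A i|) J = eJ R s J.
  by rewrite /eJ; apply: eq_bigr => i _; rewrite hA.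
have rB (J : {ffun 'I_k -> 'I_K.+1}) :
    [/\ 0 <= rJ R n J, 1 - (\sum_i (J i : nat))%:R / n%:R <= rJ R n J &
        rJ R n J <= 1 - (\sum_i (J i : nat))%:R / n%:R + ((\sum_i (J i : nat))%:R / n%:R) ^+ 2].
  have hx i : 0 <= ((J i)%:R / n%:R : R) <= 1.
    apply/andP; split; first by rewrite divr_ge0 ?ler0n.
    rewrite ler_pdivrMr // mul1r ler_nat.
    have := ltn_ord (J i); move: KK2 hK2n; lia.
  have [h1 h2 h3 h4] := prod_bounds hx.
  by rewrite natr_sum mulr_suml; split.
have SJK (J : {ffun 'I_k -> 'I_K.+1}) : (\sum_i (J i : nat) <= K2)%N.
  have : (\sum_i (J i : nat) <= \sum_(i : 'I_k) K)%N by apply: leq_sum => i _; rewrite -ltnS.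
  by rewrite sum_nat_const card_ord /K2 mulnC.
have Q1E : Q1 R p1 A = \sum_(J : {ffun 'I_k -> 'I_K.+1})
      (eJ R s J * (J p1)%:R / n%:R) / (1 - rJ R n J).
  rewrite /Q1; apply: series_geom_lim.
  - apply: pfw0; apply/negP => /eqP HA; have := hA p1.
    by rewrite HA finset.setCT cards0 => H; move: (hs p1); rewrite -H.
  - by move=> t; rewrite (pfw_geom R p1 t n0 hAK); apply: eq_bigr => J _; rewrite eJE.
  - move=> J cJ.
    have J1 : (0 < J p1)%N.
      rewrite lt0n; apply: contra cJ => /eqP ->; by rewrite mulr0 mul0r.
    have [h1 h2 h3] := rB J.
    set y := (\sum_i (J i : nat))%:R / n%:R in h2 h3.
    have y0 : 0 < y.
      rewrite /y divr_gt0 // ltr0n; apply: leq_trans J1 _.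
      by rewrite (bigD1 p1) //= leq_addr.
    have y1 : y <= 2^-1 by apply: half_bound n0 hK2n (SJK J).
    rewrite ger0_norm //; nra.
rewrite Q1E -(@Lval_eq R k p1 s K (hs p1) hsK) /Lval -sumrB.
apply: le_lt_trans (ler_norm_sum _ _ _) _.
apply: (@le_lt_trans _ _ (\sum_(J : {ffun 'I_k -> 'I_K.+1}) `|eJ R s J| * (2 * (K2%:R / n%:R)))).
  apply: ler_sum => J _.
  have [h1 h2 h3] := rB J.
  have [J0|Jpos] := posnP (J p1).
    rewrite J0 !mulr0 !mul0r subrr normr0.
    by rewrite mulr_ge0 // mulr_ge0 // divr_ge0 // ler0n.
  have -> : eJ R s J * (J p1)%:R / n%:R / (1 - rJ R n J) -
            eJ R s J * (J p1)%:R / (\sum_i (J i : nat))%:R =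
            eJ R s J * (((J p1)%:R / n%:R) / (1 - rJ R n J) - (J p1)%:R / (\sum_i (J i : nat))%:R).
    by rewrite mulrBr !mulrA.
  rewrite normrM ler_wpM2l //; apply: term_bound n0 hK2n (SJK J) _ Jpos h2 h3.
  by rewrite (bigD1 p1) //= leq_addr.
rewrite -mulr_suml -/C.
have HM := truncnS_gt (C * (2 * K2%:R) / eps).
have Mn : ((M.+1)%:R : R) <= n%:R by rewrite ler_nat; move: hn; lia.
have H1 : C * (2 * K2%:R) / eps < n%:R by apply: lt_le_trans HM Mn.
rewrite ltr_pdivrMr // in H1.
rewrite mulrA [C * _]mulrC -mulrA mulrA [_ * C]mulrC mulrA.
rewrite ltr_pdivrMr //; lra.
Qed.
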